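(* Let $B$ be a finitely realizable hypergroup and $A$ a normal sub-hypergroup of $B$. Then $A$ and the quotient hypergroup $B/A$ are finitely realizable.
   Context: A hypergroup is a nonempty set $H$ with $*:H\times H\to P^*(H)$ (nonempty subsets), extended to subsets by unions, which is associative, has a unique identity $e$, unique inverses $h^{-1}$ with $e\in(h^{-1}*h)\cap(h*h^{-1})$, and is reversible ($c\in a*b\Rightarrow a\in c*b^{-1},\ b\in a^{-1}*c$). A sub-hypergroup is a subset which is a hypergroup under the restricted hyperoperation; it is normal, $A$ say, if $bA=Ab$ for all $b\in B$ (with $bA=\{b\}*A$). The quotient $B/A$ is the hypergroup on the cosets $\{bA:b\in B\}$ with $(xA)(yA)=\{zA: z\in xA*yA\}$. For a nonempty set $X$: $1_X$ is the diagonal, $p^*=\{(a,b):(b,a)\in p\}$, $xp=\{y:(x,y)\in p\}$. An association scheme on $X$ is a partition $S$ of $X\times X$ with $1_X\in S$, closed under $p\mapsto p^*$, such that for all $p,q,r\in S$ there is a cardinal $a_{pq}^r$ with $|yp\cap zq^*|=a_{pq}^r$ for all $y\in X$, $z\in yr$. $\mathbf{H}(S)$ is the hypergroup on $S$ with $p*q=\{r: a_{pq}^r\ge1\}$, identity $1_X$, inverse $p^*$. A hypergroup is finitely realizable if it is isomorphic to $\mathbf{H}(S)$ for an association scheme $S$ on a finite set. *)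

(* Defs.v *)
From mathcomp Require Import all_boot.
Set Implicit Arguments. Unset Strict Implicit. Unset Printing Implicit Defensive.

Section Hypergroups.
Variable T : Type.

(* A hyperoperation is a relation [mul x y z] meaning "z is in x * y".
   A hypergroup is a carrier [H : T -> Prop] with such a hyperoperation. *)

Definition hg_assoc (H : T -> Prop) (mul : T -> T -> T -> Prop) :=
  forall x y z, H x -> H y -> H z -> forall w,
    (exists u, mul x y u /\ mul u z w) <-> (exists v, mul y z v /\ mul x v w).

Definition hg_identity (H : T -> Prop) (mul : T -> T -> T -> Prop) (e : T) :=
  H e /\ forall x, H x -> forall w, (mul e x w <-> w = x) /\ (mul x e w <-> w = x).

Definition is_hypergroup (H : T -> Prop) (mul : T -> T -> T -> Prop) : Prop :=
  (exists x, H x) /\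
  (forall x y, H x -> H y -> (exists z, mul x y z) /\ (forall z, mul x y z -> H z)) /\
  hg_assoc H mul /\
  exists (e : T) (inv : T -> T),
    hg_identity H mul e /\
    (forall e', hg_identity H mul e' -> e' = e) /\
    (forall h, H h -> H (inv h) /\ mul (inv h) h e /\ mul h (inv h) e) /\
    (forall h h', H h -> H h' -> mul h' h e -> mul h h' e -> h' = inv h) /\
    (forall a b c, H a -> H b -> H c -> mul a b c ->
       mul c (inv b) a /\ mul (inv a) c b).

Definition is_subhypergroup (B : T -> Prop) (mul : T -> T -> T -> Prop)
    (A : T -> Prop) : Prop :=
  (forall x, A x -> B x) /\
  (forall x y z, A x -> A y -> mul x y z -> A z) /\
  is_hypergroup A mul.

Definition lcoset (mul : T -> T -> T -> Prop) (A : T -> Prop) (b : T) : T -> Prop :=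
  fun z => exists a, A a /\ mul b a z.
Definition rcoset (mul : T -> T -> T -> Prop) (A : T -> Prop) (b : T) : T -> Prop :=
  fun z => exists a, A a /\ mul a b z.

Definition is_normal_subhypergroup (B : T -> Prop) (mul : T -> T -> T -> Prop)
    (A : T -> Prop) : Prop :=
  is_subhypergroup B mul A /\
  forall b, B b -> forall z, lcoset mul A b z <-> rcoset mul A b z.

(* Quotient B/A: carrier = the cosets bA (b in B), as subsets of T;
   (xA)(yA) = { zA : z in xA * yA }. *)
Definition quot_carrier (B : T -> Prop) (mul : T -> T -> T -> Prop)
    (A : T -> Prop) : (T -> Prop) -> Prop :=
  fun X => exists b, B b /\ X = lcoset mul A b.

Definition quot_mul (mul : T -> T -> T -> Prop) (A : T -> Prop) :
    (T -> Prop) -> (T -> Prop) -> (T -> Prop) -> Prop :=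
  fun X Y Z => exists z, Z = lcoset mul A z /\
     exists u v, X u /\ Y v /\ mul u v z.

End Hypergroups.

Definition hg_iso (T1 T2 : Type) (H1 : T1 -> Prop) (mul1 : T1 -> T1 -> T1 -> Prop)
    (H2 : T2 -> Prop) (mul2 : T2 -> T2 -> T2 -> Prop) : Prop :=
  exists f : T1 -> T2,
    (forall x, H1 x -> H2 (f x)) /\
    (forall x y, H1 x -> H1 y -> f x = f y -> x = y) /\
    (forall y, H2 y -> exists x, H1 x /\ f x = y) /\
    (forall x y, H1 x -> H1 y -> forall w,
        mul2 (f x) (f y) w <-> exists z, mul1 x y z /\ f z = w).

Section Schemes.
Variable X : finType.

Definition diag_rel : {set X * X} := [set xy | xy.1 == xy.2].
Definition transp_rel (p : {set X * X}) : {set X * X} :=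
  [set xy | (xy.2, xy.1) \in p].

(* |yp ∩ zq^*| = #{ w | (y,w) in p and (w,z) in q } *)
Definition inter_count (p q : {set X * X}) (y z : X) : nat :=
  #|[set w | ((y, w) \in p) && ((w, z) \in q)]|.

Definition is_assoc_scheme (S : {set {set X * X}}) : Prop :=
  (exists x : X, True) /\
  partition S [set: X * X] /\
  diag_rel \in S /\
  (forall p, p \in S -> transp_rel p \in S) /\
  (forall p q r, p \in S -> q \in S -> r \in S ->
     exists a : nat, forall y z, (y, z) \in r -> inter_count p q y z = a).

(* H(S): p * q = { r in S : a_pq^r >= 1 } *)
Definition HS_mul (S : {set {set X * X}}) (p q r : {set X * X}) : Prop :=
  r \in S /\ exists y z, (y, z) \in r /\ 0 < inter_count p q y z.

End Schemes.

Definition finitely_realizable (T : Type) (H : T -> Prop)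
    (mul : T -> T -> T -> Prop) : Prop :=
  exists (X : finType) (S : {set {set X * X}}),
    is_assoc_scheme S /\ hg_iso H mul (fun p => p \in S) (HS_mul S).

(* Main.v *)
Require Import Defs.
From mathcomp Require Import all_boot.
From Stdlib Require Import ClassicalEpsilon FunctionalExtensionality PropExtensionality.
Set Implicit Arguments. Unset Strict Implicit. Unset Printing Implicit Defensive.

Definition pb (P : Prop) : bool := if excluded_middle_informative P then true else false.
Lemma pbP (P : Prop) : reflect P (pb P).
Proof. rewrite /pb; case: excluded_middle_informative => h; by constructor. Qed.

Lemma card_sumb (T : finType) (P : pred T) : #|[set w | P w]| = \sum_w P w.
Proof.
rewrite -sum1_card big_mkcond /=; apply: eq_bigr => w _; rewrite inE; by case: (P w).
Qed.

Section Scheme.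
Variable X : finType.
Variable S : {set {set X * X}}.
Hypothesis hS : is_assoc_scheme S.

Lemma sch_part : partition S [set: X * X].
Proof. by case: hS => _ [? _]. Qed.

Lemma sch_cover xy : exists2 p, p \in S & xy \in p.
Proof.
case/and3P: sch_part => /eqP hc _ _.
have : xy \in cover S by rewrite hc inE.
by case/bigcupP => p hp hxy; exists p.
Qed.

Lemma sch_uniq p q xy : p \in S -> q \in S -> xy \in p -> xy \in q -> p = q.
Proof.
move=> hp hq hxp hxq; case/and3P: sch_part => _ /trivIsetP ht _.
apply/eqP; apply/negPn/negP => hne.
have := disjointFr (ht p q hp hq hne) hxp; by rewrite hxq.
Qed.

Lemma sch_nonempty p : p \in S -> exists xy, xy \in p.
Proof.
move=> hp; case/and3P: sch_part => _ _ h0.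
apply/set0Pn; apply: contraNneq h0 => <-; exact: hp.
Qed.

Lemma sch_diag : diag_rel X \in S.
Proof. by case: hS => _ [_ [? _]]. Qed.

Lemma sch_transp p : p \in S -> transp_rel p \in S.
Proof. by case: hS => _ [_ [_ [h _]]]; apply: h. Qed.

Lemma sch_const p q r : p \in S -> q \in S -> r \in S ->
  exists a : nat, forall y z, (y, z) \in r -> inter_count p q y z = a.
Proof. by case: hS => _ [_ [_ [_ h]]]; apply: h. Qed.

Lemma sch_inh : exists x : X, True.
Proof. by case: hS. Qed.

Lemma sch_val p x y : p \in S ->
  #|[set w | (x, w) \in p]| = #|[set w | (y, w) \in p]|.
Proof.
move=> hp; have [a ha] := sch_const hp (sch_transp hp) sch_diag.
have e z : [set w | (z, w) \in p] = [set w | ((z, w) \in p) && ((w, z) \in transp_rel p)].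
  by apply/setP => w; rewrite !inE /= andbb.
rewrite !e; have := ha x x; have := ha y y; rewrite /inter_count !inE /= => -> // -> //.
Qed.

Lemma sch_serial p x : p \in S -> exists w, (x, w) \in p.
Proof.
move=> hp; have [[x1 y1] h1] := sch_nonempty hp.
have : 0 < #|[set w | (x1, w) \in p]| by apply/card_gt0P; exists y1; rewrite inE.
rewrite (sch_val x1 x hp) => /card_gt0P [w]; rewrite inE => hw; by exists w.
Qed.

Lemma HS_strong p q r y z : p \in S -> q \in S -> r \in S -> HS_mul S p q r ->
  (y, z) \in r -> exists w, (y, w) \in p /\ (w, z) \in q.
Proof.
move=> hp hq hr [_ [y0 [z0 [h0 hc]]]] hyz.
have [a ha] := sch_const hp hq hr.
move: hc; rewrite (ha _ _ h0) -(ha _ _ hyz) /inter_count => /card_gt0P [w].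
rewrite inE => /andP [h1 h2]; by exists w.
Qed.

Lemma HS_intro (p q r : {set X * X}) y w z : r \in S -> (y, z) \in r -> (y, w) \in p -> (w, z) \in q ->
  HS_mul S p q r.
Proof.
move=> hr hyz h1 h2; split => //; exists y, z; split => //.
apply/card_gt0P; exists w; by rewrite inE h1 h2.
Qed.

Lemma sum_ex (Sp : {set {set X * X}}) xy : Sp \subset S ->
  \sum_(s in Sp) (xy \in s) = [exists s in Sp, xy \in s].
Proof.
move=> hsub; case: existsP => [[s0 /andP [hs0 hxy]] | hn].
  rewrite (bigD1 s0) //= hxy big1 // => s /andP [hs hne].
  apply/eqP; rewrite eqb0; apply/negP => hxs; move/negP: hne; apply.
  apply/eqP; exact: (sch_uniq (subsetP hsub _ hs) (subsetP hsub _ hs0) hxs hxy).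
rewrite big1 // => s hs; apply/eqP; rewrite eqb0; apply/negP => hx.
by apply: hn; exists s; rewrite hs hx.
Qed.

Lemma count_sum (Sp Sq : {set {set X * X}}) x y : Sp \subset S -> Sq \subset S ->
  #|[set w | [exists s in Sp, (x, w) \in s] && [exists t in Sq, (w, y) \in t]]| =
  \sum_(s in Sp) \sum_(t in Sq) inter_count s t x y.
Proof.
move=> hp hq; rewrite card_sumb.
transitivity (\sum_w (\sum_(s in Sp) ((x, w) \in s)) * (\sum_(t in Sq) ((w, y) \in t))).
  by apply: eq_bigr => w _; rewrite (sum_ex _ hp) (sum_ex _ hq) mulnb.
rewrite (eq_bigr (fun w => \sum_(s in Sp) \sum_(t in Sq) (((x,w) \in s) * ((w,y) \in t)))); last first.
  by move=> w _; rewrite big_distrl; apply: eq_bigr => s _; rewrite big_distrr.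
rewrite exchange_big; apply: eq_bigr => s hs; rewrite exchange_big; apply: eq_bigr => t ht.
rewrite /inter_count card_sumb; apply: eq_bigr => w _; by rewrite mulnb.
Qed.

Lemma count_const (Sp Sq : {set {set X * X}}) r x y x' y' :
  Sp \subset S -> Sq \subset S -> r \in S -> (x, y) \in r -> (x', y') \in r ->
  #|[set w | [exists s in Sp, (x, w) \in s] && [exists t in Sq, (w, y) \in t]]| =
  #|[set w | [exists s in Sp, (x', w) \in s] && [exists t in Sq, (w, y') \in t]]|.
Proof.
move=> hp hq hr h1 h2; rewrite !count_sum //; apply: eq_bigr => s hs; apply: eq_bigr => t ht.
have [a ha] := sch_const (subsetP hp _ hs) (subsetP hq _ ht) hr.
by rewrite (ha _ _ h1) (ha _ _ h2).
Qed.

End Scheme.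

Section Main.
Variables (T : Type) (B : T -> Prop) (mul : T -> T -> T -> Prop) (A : T -> Prop).
Variables (e : T) (inv : T -> T) (eA : T) (invA : T -> T).
Hypothesis Bne : exists x, B x.
Hypothesis Bcl : forall x y, B x -> B y -> (exists z, mul x y z) /\ (forall z, mul x y z -> B z).
Hypothesis Bassoc : hg_assoc B mul.
Hypothesis Bid : hg_identity B mul e.
Hypothesis Bidu : forall e', hg_identity B mul e' -> e' = e.
Hypothesis Binv : forall h, B h -> B (inv h) /\ mul (inv h) h e /\ mul h (inv h) e.
Hypothesis Binvu : forall h h', B h -> B h' -> mul h' h e -> mul h h' e -> h' = inv h.
Hypothesis Brev : forall a b c, B a -> B b -> B c -> mul a b c ->
       mul c (inv b) a /\ mul (inv a) c b.
Hypothesis AB : forall x, A x -> B x.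
Hypothesis Acl : forall x y z, A x -> A y -> mul x y z -> A z.
Hypothesis Aid : hg_identity A mul eA.
Hypothesis Ainv : forall h, A h -> A (invA h) /\ mul (invA h) h eA /\ mul h (invA h) eA.
Hypothesis Anorm : forall b, B b -> forall z, lcoset mul A b z <-> rcoset mul A b z.

Variables (X : finType) (S : {set {set X * X}}) (f : T -> {set X * X}).
Hypothesis hS : is_assoc_scheme S.
Hypothesis fS : forall x, B x -> f x \in S.
Hypothesis finj : forall x y, B x -> B y -> f x = f y -> x = y.
Hypothesis fsurj : forall y, y \in S -> exists x, B x /\ f x = y.
Hypothesis fmul : forall x y, B x -> B y -> forall w,
        HS_mul S (f x) (f y) w <-> exists z, mul x y z /\ f z = w.

Lemma mulB (x y z : T) : B x -> B y -> mul x y z -> B z.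
Proof. move=> hx hy; exact: (proj2 (Bcl hx hy)). Qed.

Lemma classB xy : exists c, B c /\ xy \in f c.
Proof.
have [p hp hxy] := sch_cover hS xy; have [c [hc hfc]] := fsurj hp; by exists c; rewrite hfc.
Qed.

Lemma fmul_intro (x y c : T) : B x -> B y -> B c -> mul x y c -> HS_mul S (f x) (f y) (f c).
Proof. move=> hx hy hc h; apply/fmul => //; by exists c. Qed.

Lemma fmul_elim (x y c : T) : B x -> B y -> B c -> HS_mul S (f x) (f y) (f c) -> mul x y c.
Proof.
move=> hx hy hc /fmul [] // z [hz hfz].
by rewrite -(finj (mulB hx hy hz) hc hfz).
Qed.

Lemma compose (c1 c2 : T) (u v w : X) : B c1 -> B c2 -> (u, v) \in f c1 -> (v, w) \in f c2 ->
  exists c, mul c1 c2 c /\ (u, w) \in f c.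
Proof.
move=> h1 h2 huv hvw; have [c [hc huw]] := classB (u, w).
exists c; split => //; apply: fmul_elim => //.
exact: (HS_intro (fS hc) huw huv hvw).
Qed.

Lemma strong (x y c : T) (u w : X) : B x -> B y -> B c -> mul x y c -> (u, w) \in f c ->
  exists v, (u, v) \in f x /\ (v, w) \in f y.
Proof.
move=> hx hy hc h huw; apply: (HS_strong hS (fS hx) (fS hy) (fS hc)) => //.
exact: fmul_intro.
Qed.

Lemma eAB : B eA.
Proof. by apply: AB; case: Aid. Qed.

Lemma f_eA : f eA = diag_rel X.
Proof.
have hp := fS eAB.
have trans u v w : (u, v) \in f eA -> (v, w) \in f eA -> (u, w) \in f eA.
  move=> h1 h2; have [c [hm hc]] := compose eAB eAB h1 h2.
  have := (proj1 ((proj2 Aid) eA (proj1 Aid) c)).1 hm; by move=> <-.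
have [[x y] hxy] := sch_nonempty hS hp.
have hsub : [set w | (y, w) \in f eA] \subset [set w | (x, w) \in f eA].
  apply/subsetP => w; rewrite !inE; exact: trans.
have := subset_cardP (sch_val hS y x hp) hsub => /(_ y).
rewrite !inE hxy => hyy.
apply: (sch_uniq hS hp (sch_diag hS) hyy); by rewrite inE.
Qed.

Lemma diag_id (q w : {set X * X}) : q \in S -> w \in S -> (HS_mul S (diag_rel X) q w <-> w = q) /\
  (HS_mul S q (diag_rel X) w <-> w = q).
Proof.
move=> hq hw; have [[y z] hyz] := sch_nonempty hS hq.
split; split.
- move=> hm; have [[y1 z1] h1] := sch_nonempty hS hw.
  have [v [hv1 hv2]] := HS_strong hS (sch_diag hS) hq hw hm h1.
  move: hv1; rewrite inE /= => /eqP ?; subst v.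
  exact: (sch_uniq hS hw hq h1 hv2).
- move=> ->; apply: (HS_intro hq hyz _ hyz); by rewrite inE.
- move=> hm; have [[y1 z1] h1] := sch_nonempty hS hw.
  have [v [hv1 hv2]] := HS_strong hS hq (sch_diag hS) hw hm h1.
  move: hv2; rewrite inE /= => /eqP ?; subst v.
  exact: (sch_uniq hS hw hq h1 hv1).
- move=> ->; apply: (HS_intro hq hyz hyz); by rewrite inE.
Qed.

Lemma eA_e : eA = e.
Proof.
apply: Bidu; split; first exact: eAB.
move=> x hx w; split; split.
- move=> hm; have hw := mulB eAB hx hm.
  have := fmul_intro eAB hx hw hm; rewrite f_eA => /(diag_id (fS hx) (fS hw)).1.
  exact: finj hw hx.
- move=> ->; have := (diag_id (fS hx) (fS hx)).1.2 erefl; rewrite -f_eA.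
  move/(fmul eAB hx) => [z [hz hfz]]. have ezx := finj (mulB eAB hx hz) hx hfz; by rewrite ezx in hz.
- move=> hm; have hw := mulB hx eAB hm.
  have := fmul_intro hx eAB hw hm; rewrite f_eA => /(diag_id (fS hx) (fS hw)).2.
  exact: finj hw hx.
- move=> ->; have := (diag_id (fS hx) (fS hx)).2.2 erefl; rewrite -f_eA.
  case/(fmul hx eAB) => z [hz hfz]; have ezx := finj (mulB hx eAB hz) hx hfz; by rewrite ezx in hz.
Qed.

Lemma eA_A : A e.
Proof. rewrite -eA_e; by case: Aid. Qed.

Lemma inv_A a : A a -> A (inv a).
Proof.
move=> ha; have [h1 [h2 h3]] := Ainv ha.
rewrite -(Binvu (AB ha) (AB h1)) //; by rewrite -eA_e.
Qed.

Lemma Be : B e. Proof. by case: Bid. Qed.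

Lemma mul_e_r x w : B x -> mul x e w -> w = x.
Proof. move=> hx; exact: (proj1 ((proj2 Bid) x hx w).2). Qed.
Lemma mul_e_l x w : B x -> mul e x w -> w = x.
Proof. move=> hx; exact: (proj1 ((proj2 Bid) x hx w).1). Qed.
Lemma mul_e_r' x : B x -> mul x e x.
Proof. move=> hx; exact: (proj2 ((proj2 Bid) x hx x).2). Qed.

Definition Pset : {set {set X * X}} := [set p in S | pb (exists a, A a /\ f a = p)].
Definition E : {set X * X} := \bigcup_(p in Pset) p.

Lemma inPset p : p \in Pset <-> exists a, A a /\ f a = p.
Proof.
rewrite inE; split; first by case/andP => _ /pbP.
case=> a [ha hf]; apply/andP; split; first by rewrite -hf; exact: fS (AB ha).
apply/pbP; by exists a.
Qed.

Lemma Pset_sub : Pset \subset S.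
Proof. apply/subsetP => p; rewrite inE; by case/andP. Qed.

Lemma inE_ xy : xy \in E <-> exists a, A a /\ xy \in f a.
Proof.
split.
  case/bigcupP => p /inPset [a [ha hfa]] h; exists a; by rewrite hfa.
case=> a [ha h]; apply/bigcupP; exists (f a) => //; apply/inPset; by exists a.
Qed.

Lemma E_refl x : (x, x) \in E.
Proof. apply/inE_; exists e; split; first exact: eA_A. by rewrite -eA_e f_eA inE. Qed.

Lemma E_trans x y z : (x, y) \in E -> (y, z) \in E -> (x, z) \in E.
Proof.
case/inE_ => a [ha h1]; case/inE_ => a' [ha' h2].
have [c [hm hc]] := compose (AB ha) (AB ha') h1 h2.
apply/inE_; exists c; split => //; exact: Acl ha ha' hm.
Qed.

Lemma E_sym x y : (x, y) \in E -> (y, x) \in E.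
Proof.
case/inE_ => a [ha h]; have [b [hb hyx]] := classB (y, x).
have hm : mul a b e.
  rewrite -eA_e; apply: fmul_elim (AB ha) hb eAB _.
  apply: (HS_intro (fS eAB) _ h hyx); by rewrite f_eA inE.
have [_ h2] := Brev (AB ha) hb Be hm.
have hai := (Binv (AB ha)).1.
have := mul_e_r hai h2 => hbe.
apply/inE_; exists b; split => //; rewrite hbe; exact: inv_A.
Qed.

Lemma cosB b c : B b -> lcoset mul A b c -> B c.
Proof. move=> hb [a [ha hm]]; exact: mulB hb (AB ha) hm. Qed.

Lemma cos_sub b c : B b -> lcoset mul A b c -> forall z, lcoset mul A c z -> lcoset mul A b z.
Proof.
move=> hb [a [ha hm]] z [a' [ha' hm']].
have [v [hv hv']] := (Bassoc hb (AB ha) (AB ha') z).1 (ex_intro _ c (conj hm hm')).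
exists v; split => //; exact: Acl ha ha' hv.
Qed.

Lemma cos_sym b c : B b -> lcoset mul A b c -> lcoset mul A c b.
Proof.
move=> hb [a [ha hm]]; have hc := mulB hb (AB ha) hm.
have [h1 _] := Brev hb (AB ha) hc hm.
exists (inv a); split => //; exact: inv_A.
Qed.

Lemma cos_eq b c : B b -> lcoset mul A b c -> forall z, lcoset mul A b z <-> lcoset mul A c z.
Proof.
move=> hb h z; split => hz; last exact: (cos_sub hb h hz).
exact: (cos_sub (cosB hb h) (cos_sym hb h) hz).
Qed.

Lemma cos_self b : B b -> lcoset mul A b b.
Proof. move=> hb; exists e; split; [exact: eA_A | exact: mul_e_r']. Qed.

Lemma Pset_E p xy : p \in Pset -> xy \in p -> xy \in E.
Proof. move=> hp h; apply/bigcupP; by exists p. Qed.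

Lemma Pset_f a : A a -> f a \in Pset.
Proof. move=> ha; apply/inPset; by exists a. Qed.

Lemma Pset_transp p : p \in Pset -> transp_rel p \in Pset.
Proof.
move=> hp; have hpS := subsetP Pset_sub _ hp.
have [[x y] hxy] := sch_nonempty hS hpS.
have : (y, x) \in E by apply: E_sym; exact: Pset_E hp hxy.
case/inE_ => a [ha hyx].
have -> // : transp_rel p = f a.
  apply: (sch_uniq hS (sch_transp hS hpS) (fS (AB ha)) _ hyx); by rewrite inE.
exact: Pset_f.
Qed.

Lemma diag_Pset : diag_rel X \in Pset.
Proof. rewrite -f_eA; apply: Pset_f; by case: Aid. Qed.

Section PartA.
Variable x0 : X.
Definition Y : finType := {y : X | (x0, y) \in E}.
Definition mkY w (hw : (x0, w) \in E) : Y := exist (fun y => (x0, y) \in E) w hw.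
Definition x0Y : Y := mkY (E_refl x0).
Definition restr (p : {set X * X}) : {set Y * Y} := [set yz | (val yz.1, val yz.2) \in p].
Definition SA : {set {set Y * Y}} := [set restr p | p in Pset].

Lemma serialY p : p \in Pset -> exists w : Y, (x0, val w) \in p.
Proof.
move=> hp; have [w hw] := sch_serial hS x0 (subsetP Pset_sub _ hp).
by exists (mkY (Pset_E hp hw)).
Qed.

Lemma count_restr p q (y z : Y) : p \in Pset ->
  inter_count (restr p) (restr q) y z = inter_count p q (val y) (val z).
Proof.
move=> hp; rewrite /inter_count -(card_imset _ val_inj); apply: eq_card => w.
rewrite [in RHS]inE; apply/imsetP/andP.
  by case=> w'; rewrite !inE /= => /andP [h1 h2] ->.
case=> h1 h2; have hw : (x0, w) \in E := E_trans (valP y) (Pset_E hp h1).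
by exists (mkY hw) => //; rewrite !inE /= h1 h2.
Qed.

Lemma SA_scheme : is_assoc_scheme SA.
Proof.
split; first by exists x0Y.
split.
  apply/and3P; split.
  - apply/eqP/setP => -[y z]; rewrite inE; apply/bigcupP.
    have : (val y, val z) \in E := E_trans (E_sym (valP y)) (valP z).
    case/inE_ => a [ha h]; exists (restr (f a)); last by rewrite inE.
    apply: imset_f; exact: Pset_f.
  - apply/trivIsetP => P1 P2 /imsetP [p hp ->] /imsetP [q hq ->] hne.
    rewrite -setI_eq0; apply/eqP/setP => yz; rewrite !inE.
    apply/negbTE/negP => /andP [h1 h2]; move/negP: hne; apply.
    by rewrite (sch_uniq hS (subsetP Pset_sub _ hp) (subsetP Pset_sub _ hq) h1 h2).
  - apply/negP => /imsetP [p hp h0].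
    have [w hw] := serialY hp.
    have : (x0Y, w) \in restr p by rewrite inE.
    by rewrite -h0 inE.
split.
  have -> : diag_rel Y = restr (diag_rel X).
    apply/setP => -[y z]; rewrite !inE /=; by rewrite val_eqE.
  exact: imset_f diag_Pset.
split.
  move=> P1 /imsetP [p hp ->].
  have -> : transp_rel (restr p) = restr (transp_rel p).
    by apply/setP => -[y z]; rewrite !inE.
  apply: imset_f; exact: Pset_transp.
move=> P1 Q1 R1 /imsetP [p hp ->] /imsetP [q hq ->] /imsetP [r hr ->].
have [a ha] := sch_const hS (subsetP Pset_sub _ hp) (subsetP Pset_sub _ hq)
  (subsetP Pset_sub _ hr).
exists a => y z; rewrite inE /= => hyz; rewrite count_restr //; exact: ha.
Qed.

Lemma partA_iso : hg_iso A mul (fun p => p \in SA) (HS_mul SA).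
Proof.
exists (fun a => restr (f a)); split.
  move=> a ha; apply: imset_f; exact: Pset_f.
split.
  move=> a a' ha ha' heq; apply: finj (AB ha) (AB ha') _.
  have [w hw] := serialY (Pset_f ha).
  have : (x0Y, w) \in restr (f a') by rewrite -heq inE.
  rewrite inE /= => hw'.
  exact: (sch_uniq hS (fS (AB ha)) (fS (AB ha')) hw hw').
split.
  move=> P1 /imsetP [p /inPset [a [ha hfa]] ->]; exists a; by rewrite hfa.
move=> x y hx hy W; split.
  case=> /imsetP [p /inPset [c [hc hfc]] ->] [y1 [z1 [h1 hcnt]]].
  move: h1 hcnt; rewrite -hfc inE /= => h1 /card_gt0P [w]; rewrite !inE /= => /andP [hw1 hw2].
  exists c; split => //.
  apply: fmul_elim (AB hx) (AB hy) (AB hc) _.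
  exact: (HS_intro (fS (AB hc)) h1 hw1 hw2).
case=> z [hm <-]; have hz := Acl hx hy hm.
split; first by apply: imset_f; exact: Pset_f.
have [w0 hw0] := serialY (Pset_f hz).
have [v [hv1 hv2]] := strong (AB hx) (AB hy) (AB hz) hm hw0.
have hvE : (x0, v) \in E := Pset_E (Pset_f hx) hv1.
exists x0Y, w0; split; first by rewrite inE.
apply/card_gt0P; exists (mkY hvE); by rewrite !inE /= hv1 hv2.
Qed.

Lemma partA : finitely_realizable A mul.
Proof. exists Y, SA; split; [exact: SA_scheme | exact: partA_iso]. Qed.

End PartA.

Definition cls (x : X) : {set X} := [set y | (x, y) \in E].
Definition Qs : {set {set X}} := [set cls x | x in [set: X]].
Definition XQ : finType := {C : {set X} | C \in Qs}.
Definition clsQ (x : X) : XQ := exist (fun C => C \in Qs) (cls x) (imset_f cls (in_setT x)).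

Lemma XQ_rep (C : XQ) : exists x, C = clsQ x.
Proof.
case: C => C hC; have := hC; case/imsetP => x _ hCx.
exists x; apply: val_inj => /=; exact: hCx.
Qed.

Lemma cls_eq x y : (x, y) \in E -> cls x = cls y.
Proof.
move=> h; apply/setP => z; rewrite !inE; apply/idP/idP => hz.
  exact: E_trans (E_sym h) hz.
exact: E_trans h hz.
Qed.

Lemma clsQ_eq x y : (clsQ x == clsQ y) = ((x, y) \in E).
Proof.
apply/eqP/idP.
  move=> h; have hv : cls x = cls y by exact: (f_equal val h).
  have : y \in cls x by rewrite hv inE E_refl.
  by rewrite inE.
move=> h; apply: val_inj => /=; exact: cls_eq.
Qed.

Definition ext (p : {set X * X}) : {set X * X} :=
  [set xy | [exists u, [exists v, [&& (xy.1, u) \in E, (u, v) \in p & (v, xy.2) \in E]]]].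

Lemma extP (p : {set X * X}) x y : reflect (exists u v, [/\ (x, u) \in E, (u, v) \in p & (v, y) \in E])
  ((x, y) \in ext p).
Proof.
rewrite inE /=; apply: (iffP existsP).
  by case=> u /existsP [v /and3P [h1 h2 h3]]; exists u, v.
by case=> u [v [h1 h2 h3]]; exists u; apply/existsP; exists v; rewrite h1 h2 h3.
Qed.

Lemma ext_inv (p : {set X * X}) x x' y y' : (x', x) \in E -> (x, y) \in ext p -> (y, y') \in E ->
  (x', y') \in ext p.
Proof.
move=> h1 /extP [u [v [h2 h3 h4]]] h5; apply/extP; exists u, v; split => //.
  exact: E_trans h1 h2.
exact: E_trans h4 h5.
Qed.

Lemma ext_self (p : {set X * X}) xy : xy \in p -> xy \in ext p.
Proof. case: xy => x y h; apply/extP; exists x, y; by rewrite !E_refl. Qed.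

Definition qrel (p : {set X * X}) : {set XQ * XQ} :=
  [set CD : XQ * XQ | [exists x, [exists y, [&& x \in val CD.1, y \in val CD.2 & (x, y) \in ext p]]]].

Lemma qrel_cls (p : {set X * X}) x y : ((clsQ x, clsQ y) \in qrel p) = ((x, y) \in ext p).
Proof.
rewrite inE /=; apply/existsP/idP.
  case=> x' /existsP [y' /and3P [h1 h2 h3]].
  rewrite /= !inE in h1 h2.
  exact: ext_inv h1 h3 (E_sym h2).
move=> h; exists x; apply/existsP; exists y; rewrite h andbT; apply/andP; split; by rewrite /= inE E_refl.
Qed.

Lemma L_ext b x y : B b ->
  ((x, y) \in ext (f b) <-> exists c, lcoset mul A b c /\ (x, y) \in f c).
Proof.
move=> hb; split.
  case/extP => u [v [/inE_ [a1 [ha1 h1]] h2 /inE_ [a2 [ha2 h3]]]].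
  have [d [hd1 hd2]] := compose (AB ha1) hb h1 h2.
  have hdB := mulB (AB ha1) hb hd1.
  have [c [hc1 hc2]] := compose hdB (AB ha2) hd2 h3.
  have : rcoset mul A b d by exists a1.
  case/(Anorm hb) => a3 [ha3 hm3].
  have [v' [hv1 hv2]] := (Bassoc hb (AB ha3) (AB ha2) c).1 (ex_intro _ d (conj hm3 hc1)).
  exists c; split => //; exists v'; split => //; exact: Acl ha3 ha2 hv1.
case=> c [[a [ha hm]] hxy]; have hc := mulB hb (AB ha) hm.
have [w [hw1 hw2]] := strong hb (AB ha) hc hm hxy.
apply/extP; exists x, w; split => //; first exact: E_refl.
apply/inE_; by exists a.
Qed.

Lemma ext_eq b b' : B b -> B b' -> (forall z, lcoset mul A b z <-> lcoset mul A b' z) ->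
  ext (f b) = ext (f b').
Proof.
move=> hb hb' h; apply/setP => -[x y]; apply/idP/idP.
  case/(L_ext _ _ hb) => c [hc hxy]; apply/(L_ext _ _ hb'); exists c; split => //; exact/h.
case/(L_ext _ _ hb') => c [hc hxy]; apply/(L_ext _ _ hb); exists c; split => //; exact/h.
Qed.

Lemma ext_meet b b' x y : B b -> B b' -> (x, y) \in ext (f b) -> (x, y) \in ext (f b') ->
  forall z, lcoset mul A b z <-> lcoset mul A b' z.
Proof.
move=> hb hb' /(L_ext _ _ hb) [c [hc h1]] /(L_ext _ _ hb') [c' [hc' h2]].
have hcB := cosB hb hc; have hcB' := cosB hb' hc'.
have ecc : c = c' by apply: finj hcB hcB' (sch_uniq hS (fS hcB) (fS hcB') h1 h2).
subst c' => z; rewrite (cos_eq hb hc) (cos_eq hb' hc'); done.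
Qed.

Lemma qrel_eq b b' : B b -> B b' -> (forall z, lcoset mul A b z <-> lcoset mul A b' z) ->
  qrel (f b) = qrel (f b').
Proof. move=> hb hb' h; by rewrite /qrel (ext_eq hb hb' h). Qed.

Lemma qrel_disj b b' CD : B b -> B b' -> CD \in qrel (f b) -> CD \in qrel (f b') ->
  qrel (f b) = qrel (f b').
Proof.
move=> hb hb'; case: CD => C D; have [x ->] := XQ_rep C; have [y ->] := XQ_rep D.
rewrite !qrel_cls => h1 h2; apply (qrel_eq hb hb'); exact: ext_meet hb hb' h1 h2.
Qed.

Lemma qrel_coset b b' : B b -> B b' -> qrel (f b) = qrel (f b') ->
  forall z, lcoset mul A b z <-> lcoset mul A b' z.
Proof.
move=> hb hb' heq; have [[x y] hxy] := sch_nonempty hS (fS hb).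
have h1 := ext_self hxy; have : (clsQ x, clsQ y) \in qrel (f b') by rewrite -heq qrel_cls.
rewrite qrel_cls => h2; exact: ext_meet hb hb' h1 h2.
Qed.

Definition SQ : {set {set XQ * XQ}} := [set qrel p | p in S].

Lemma ext_diag x y : ((x, y) \in ext (diag_rel X)) = ((x, y) \in E).
Proof.
apply/extP/idP.
  case=> u [v [h1 h2 h3]]; move: h2; rewrite inE /= => /eqP ?; subst v.
  exact: E_trans h1 h3.
move=> h; exists y, y; split => //; [by rewrite inE /= | exact: E_refl].
Qed.

Lemma ext_transp (p : {set X * X}) x y : ((y, x) \in ext p) = ((x, y) \in ext (transp_rel p)).
Proof.
apply/extP/extP; case=> u [v [h1 h2 h3]]; exists v, u; split.
- exact: E_sym h3.
- by rewrite inE.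
- exact: E_sym h1.
- exact: E_sym h3.
- by move: h2; rewrite inE.
- exact: E_sym h1.
Qed.

Definition Sp (p : {set X * X}) : {set {set X * X}} := [set s in S | s \subset ext p].

Lemma Sp_sub p : Sp p \subset S.
Proof. apply/subsetP => s; rewrite inE; by case/andP. Qed.

Lemma ext_union p x w : p \in S -> ((x, w) \in ext p) = [exists s in Sp p, (x, w) \in s].
Proof.
move=> hp; have [b [hb hfb]] := fsurj hp; rewrite -hfb.
apply/idP/existsP.
  case/(L_ext _ _ hb) => c [hc h]; exists (f c).
  rewrite h andbT inE fS /=; last exact: cosB hb hc.
  apply/subsetP => -[u v] huv; apply/(L_ext _ _ hb); by exists c.
case=> s /andP [hs hxw]; move: hs; rewrite inE => /andP [_ hsub].
exact: (subsetP hsub _ hxw).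
Qed.

Definition Ncount p q x y := #|[set w | ((x, w) \in ext p) && ((w, y) \in ext q)]|.

Lemma N_class p q r x y x' y' : p \in S -> q \in S -> r \in S -> (x, y) \in r ->
  (x', y') \in r -> Ncount p q x y = Ncount p q x' y'.
Proof.
move=> hp hq hr h1 h2; rewrite /Ncount.
have eqs z z' : [set w | ((z, w) \in ext p) && ((w, z') \in ext q)] =
  [set w | [exists s in Sp p, (z, w) \in s] && [exists t in Sp q, (w, z') \in t]].
  by apply/setP => w; rewrite in_set [in RHS]in_set -!ext_union.
rewrite !eqs; exact: (count_const hS (Sp_sub p) (Sp_sub q) hr h1 h2).
Qed.

Lemma cls_card x y : #|cls x| = #|cls y|.
Proof.
have eqs z : cls z = [set w | [exists s in Pset, (z, w) \in s] && [exists t in S, (w, z) \in t]].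
  apply/setP => w; rewrite /cls in_set [in RHS]in_set.
  have -> : [exists t in S, (w, z) \in t].
    by case: (sch_cover hS (w, z)) => t ht h; apply/existsP; exists t; rewrite ht h.
  rewrite andbT; apply/bigcupP/existsP.
    by case=> s hs h; exists s; rewrite hs h.
  by case=> s /andP [hs h]; exists s.
rewrite !eqs; apply: (count_const hS Pset_sub (subxx S) (sch_diag hS)); by rewrite inE.
Qed.

Lemma cls_pos x : 0 < #|cls x|.
Proof. apply/card_gt0P; exists x; by rewrite inE E_refl. Qed.

Lemma N_E p q x x' y y' : (x, x') \in E -> (y, y') \in E -> Ncount p q x y = Ncount p q x' y'.
Proof.
move=> hx hy; apply: eq_card => w; rewrite in_set [in RHS]in_set.
apply/andP/andP; case=> h1 h2; split.
- exact: ext_inv (E_sym hx) h1 (E_refl w).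
- exact: ext_inv (E_refl w) h2 hy.
- exact: ext_inv hx h1 (E_refl w).
- exact: ext_inv (E_refl w) h2 (E_sym hy).
Qed.

Lemma N_ext p q r x y x' y' : p \in S -> q \in S -> r \in S -> (x, y) \in ext r ->
  (x', y') \in ext r -> Ncount p q x y = Ncount p q x' y'.
Proof.
move=> hp hq hr /extP [u [v [h1 h2 h3]]] /extP [u' [v' [h1' h2' h3']]].
rewrite (N_E p q h1 (E_sym h3)) (N_E p q h1' (E_sym h3')).
exact: N_class hp hq hr h2 h2'.
Qed.

Lemma sum_const_cond (U : finType) (P : pred U) (c : nat) :
  \sum_(w | P w) c = #|[set w | P w]| * c.
Proof.
rewrite -sum1_card big_distrl /=; apply: eq_big => [w|w _]; by rewrite ?inE ?mul1n.
Qed.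

Lemma N_q p q x y : Ncount p q x y =
  #|cls x| * inter_count (qrel p) (qrel q) (clsQ x) (clsQ y).
Proof.
rewrite /Ncount (@card_sumb _ (fun w => ((x, w) \in ext p) && ((w, y) \in ext q))).
rewrite /inter_count (@card_sumb _ (fun W => ((clsQ x, W) \in qrel p) && ((W, clsQ y) \in qrel q))).
rewrite (partition_big clsQ xpredT) //= big_distrr /=.
apply: eq_bigr => W _; have [z ->] := XQ_rep W.
transitivity (\sum_(w | clsQ w == clsQ z)
   (((clsQ x, clsQ z) \in qrel p) && ((clsQ z, clsQ y) \in qrel q) : nat)).
  by apply: eq_bigr => w /eqP hw; rewrite -hw !qrel_cls.
rewrite sum_const_cond; congr (_ * _).
rewrite (cls_card x z); apply: eq_card => w; rewrite !inE clsQ_eq.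
apply/idP/idP; exact: E_sym.
Qed.

Lemma SQ_scheme : is_assoc_scheme SQ.
Proof.
split; first by case: (sch_inh hS) => x _; exists (clsQ x).
split.
  apply/and3P; split.
  - apply/eqP/setP => -[C D]; rewrite in_setT; apply/bigcupP.
    have [x ->] := XQ_rep C; have [y ->] := XQ_rep D.
    have [c [hc h]] := classB (x, y).
    exists (qrel (f c)); first by apply: imset_f; exact: fS hc.
    rewrite qrel_cls; exact: ext_self.
  - apply/trivIsetP => P1 P2 /imsetP [p hp ->] /imsetP [q hq ->] hne.
    have [b [hb hfb]] := fsurj hp; have [b' [hb' hfb']] := fsurj hq.
    rewrite -hfb -hfb' in hne *.
    rewrite -setI_eq0; apply/eqP/setP => CD; rewrite in_setI in_set0.
    apply/negbTE/negP => /andP [h1 h2]; move/negP: hne; apply; apply/eqP.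
    exact: qrel_disj hb hb' h1 h2.
  - apply/negP => /imsetP [p hp h0]; have [[x y] hxy] := sch_nonempty hS hp.
    have : (clsQ x, clsQ y) \in qrel p by rewrite qrel_cls; exact: ext_self.
    by rewrite -h0 in_set0.
split.
  have -> : diag_rel XQ = qrel (diag_rel X).
    apply/setP => -[C D]; have [x ->] := XQ_rep C; have [y ->] := XQ_rep D.
    by rewrite qrel_cls ext_diag -clsQ_eq /diag_rel in_set.
  exact: imset_f (sch_diag hS).
split.
  move=> P1 /imsetP [p hp ->].
  have -> : transp_rel (qrel p) = qrel (transp_rel p).
    apply/setP => -[C D]; have [x ->] := XQ_rep C; have [y ->] := XQ_rep D.
    by rewrite /transp_rel in_set /= !qrel_cls -ext_transp.
  exact: imset_f (sch_transp hS hp).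
move=> P1 Q1 R1 /imsetP [p hp ->] /imsetP [q hq ->] /imsetP [r hr ->].
have [[x1 y1] h1] := sch_nonempty hS hr.
exists (inter_count (qrel p) (qrel q) (clsQ x1) (clsQ y1)) => C D.
have [x ->] := XQ_rep C; have [y ->] := XQ_rep D; rewrite qrel_cls => hxy.
apply/eqP; rewrite -(eqn_pmul2l (cls_pos x)) -N_q (cls_card x x1) -N_q; apply/eqP.
exact: N_ext hp hq hr hxy (ext_self h1).
Qed.

Section PartQ.
Variable iT : inhabited T.

Definition rep (Xc : T -> Prop) : T := epsilon iT (fun b => B b /\ Xc = lcoset mul A b).

Lemma rep_spec Xc : quot_carrier B mul A Xc -> B (rep Xc) /\ Xc = lcoset mul A (rep Xc).
Proof. move=> h; exact: (epsilon_spec iT _ h). Qed.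

Lemma lcoset_ext b b' : (forall z, lcoset mul A b z <-> lcoset mul A b' z) ->
  lcoset mul A b = lcoset mul A b'.
Proof.
move=> h; apply: functional_extensionality => z; apply: propositional_extensionality; exact: h.
Qed.

Definition FQ (Xc : T -> Prop) : {set XQ * XQ} := qrel (f (rep Xc)).

Lemma partQ_iso : hg_iso (quot_carrier B mul A) (quot_mul mul A) (fun p => p \in SQ) (HS_mul SQ).
Proof.
exists FQ; split.
  move=> Xc hX; apply: imset_f; exact: fS (rep_spec hX).1.
split.
  move=> X1 X2 h1 h2 heq; have [hb1 e1] := rep_spec h1; have [hb2 e2] := rep_spec h2.
  rewrite e1 e2; apply: lcoset_ext; exact: qrel_coset hb1 hb2 heq.
split.
  move=> W /imsetP [p hp ->]; have [b [hb hfb]] := fsurj hp.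
  have hq : quot_carrier B mul A (lcoset mul A b) by exists b.
  exists (lcoset mul A b); split => //; have [hr er] := rep_spec hq.
  rewrite /FQ -hfb; apply: (qrel_eq hr hb) => z; by rewrite -er.
move=> X1 X2 h1 h2 W; rewrite /FQ.
move: (rep X1) (rep_spec h1) => b1 [hb1 e1]; move: (rep X2) (rep_spec h2) => b2 [hb2 e2].
subst X1 X2; split.
  case=> /imsetP [p hp ->] [C [D [hCD hcnt]]].
  have [c0 [hc0 hfc0]] := fsurj hp.
  move: hcnt; rewrite /inter_count => /card_gt0P [V]; rewrite in_set => /andP [hCV hVD].
  have [x ex] := XQ_rep C; have [v ev] := XQ_rep V; have [y ey] := XQ_rep D.
  subst C V D; rewrite qrel_cls in hCV; rewrite qrel_cls in hVD; rewrite -hfc0 in hCD.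
  have [c1 [hc1 hxv]] := (L_ext _ _ hb1).1 hCV.
  have [c2 [hc2 hvy]] := (L_ext _ _ hb2).1 hVD.
  have hc1B := cosB hb1 hc1; have hc2B := cosB hb2 hc2.
  have [c3 [hm hxy]] := compose hc1B hc2B hxv hvy; have hc3B := mulB hc1B hc2B hm.
  exists (lcoset mul A c3); split.
    exists c3; split => //; by exists c1, c2.
  have hq3 : quot_carrier B mul A (lcoset mul A c3) by exists c3.
  have [hr3 er3] := rep_spec hq3.
  transitivity (qrel (f c3)).
    apply: (qrel_eq hr3 hc3B) => z; by rewrite -er3.
  rewrite -hfc0; apply: (qrel_disj hc3B hc0 _ hCD); rewrite qrel_cls; exact: ext_self.
case=> Z [[z [ez [u [v [hu [hv hm]]]]]] <-].
have hub := cosB hb1 hu; have hvb := cosB hb2 hv; have hzb := mulB hub hvb hm.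
have hqZ : quot_carrier B mul A Z by exists z.
have [hr er] := rep_spec hqZ.
split; first by apply: imset_f; exact: fS hr.
have [[x y] hxy] := sch_nonempty hS (fS hzb).
have [w [hw1 hw2]] := strong hub hvb hzb hm hxy.
exists (clsQ x), (clsQ y); split.
  rewrite qrel_cls; apply/(L_ext _ _ hr); exists z; split => //.
  rewrite -er ez; exact: cos_self hzb.
rewrite /inter_count; apply/card_gt0P; exists (clsQ w); rewrite in_set; apply/andP; split.
  rewrite qrel_cls; apply/(L_ext _ _ hb1); by exists u.
rewrite qrel_cls; apply/(L_ext _ _ hb2); by exists v.
Qed.

Lemma partQ : finitely_realizable (quot_carrier B mul A) (quot_mul mul A).
Proof. exists XQ, SQ; split; [exact: SQ_scheme | exact: partQ_iso]. Qed.

End PartQ.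

End Main.

Unset Implicit Arguments.

Theorem proposition4p9 (T : Type) (B : T -> Prop) (mul : T -> T -> T -> Prop)
    (A : T -> Prop) :
  is_hypergroup B mul ->
  finitely_realizable B mul ->
  is_normal_subhypergroup B mul A ->
  finitely_realizable A mul /\
  finitely_realizable (quot_carrier B mul A) (quot_mul mul A).
Proof.
move=> hB [X [S [hS [f [fS [finj [fsurj fmul]]]]]]] [[AB [Acl hA]] Anorm].
case: hB => Bne [Bcl [Bassoc [e [inv [Bid [Bidu [Binv [Binvu Brev]]]]]]]].
case: hA => _ [_ [_ [eA [invA [Aid [_ [Ainv _]]]]]]].
case: (sch_inh hS) => x0 _.
have iT : inhabited T by case: Bne => t _; constructor.
split.
  exact: (partA Bcl Bid Bidu Binv Binvu Brev AB Acl Aid Ainv hS fS finj fsurj fmul x0).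
exact: (partQ Bcl Bassoc Bid Bidu Binv Binvu Brev AB Acl Aid Ainv Anorm hS fS finj fsurj fmul iT).
Qed.
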